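(* Consider the centralized caching problem with uncoded prefetching with $N$ files, $K$ users, and local cache size of $M$ files per user, $t=KM/N$. For every file size $F$, every $\epsilon>0$, and every statistics $\boldsymbol{s}$, $$\min_{\boldsymbol{\mathcal{M}}}R^*_\epsilon(\boldsymbol{s},\boldsymbol{\mathcal{M}})\ \ge\ \mathrm{Conv}\left(\frac{\binom{K}{t+1}-\binom{K-N_{\mathrm{e}}(\boldsymbol{s})}{t+1}}{\binom{K}{t}}\right)-\left(\frac{1}{F}+N_{\mathrm{e}}^2(\boldsymbol{s})\epsilon\right),$$ where the minimum is over all uncoded prefetchings satisfying the memory constraint and $\mathrm{Conv}(f(t))$ denotes the lower convex envelope of the points $\{(t,f(t)):t\in\{0,1,\dots,K\}\}$, evaluated at $t=KM/N$.
   Context: Setting: $N$ files $W_1,\dots,W_N$ of $F$ bits each, all bits i.i.d. Bernoulli$(1/2)$; $K$ users each with $MF$ bits of cache, $M\in[0,N]$. An uncoded prefetching $\boldsymbol{\mathcal{M}}=(\mathcal{M}_1,\dots,\mathcal{M}_K)$: each $\mathcal{M}_k$ is a set of at most $MF$ bit indices and user $k$ stores those bits. For a demand $\boldsymbol{d}\in\{1,\dots,N\}^K$, a rate $R$ is $\epsilon$-achievable if there are an encoder $X=\psi(W_1,\dots,W_N)\in\{0,1\}^{RF}$ and decoders such that each user $k$ recovers $W_{d_k}$ from $X$ and its cached bits with error probability at most $\epsilon$; $R^*_\epsilon(\boldsymbol{d},\boldsymbol{\mathcal{M}})$ is the minimum such rate. The statistics $\boldsymbol{s}(\boldsymbol{d})$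 of a demand is the length-$N$ array, sorted in nonincreasing order, whose $i$-th entry is the number of users requesting the $i$-th most requested file; the type $\mathcal{D}_{\boldsymbol{s}}$ is the set of demands with statistics $\boldsymbol{s}$; $N_{\mathrm{e}}(\boldsymbol{s})$ is the number of distinct files requested by any demand in $\mathcal{D}_{\boldsymbol{s}}$ (number of nonzero entries of $\boldsymbol{s}$). $R^*_\epsilon(\boldsymbol{s},\boldsymbol{\mathcal{M}})=\frac{1}{|\mathcal{D}_{\boldsymbol{s}}|}\sum_{\boldsymbol{d}\in\mathcal{D}_{\boldsymbol{s}}}R^*_\epsilon(\boldsymbol{d},\boldsymbol{\mathcal{M}})$. Convention: $\binom{n}{k}=0$ when $k>n$. *)

(* Defs.v *)
From HB Require Import structures.
From mathcomp Require Import all_boot all_order all_algebra.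
From mathcomp Require Import boolp classical_sets reals.
Set Implicit Arguments. Unset Strict Implicit. Unset Printing Implicit Defensive.
Import Order.TTheory GRing.Theory Num.Theory.
Local Open Scope ring_scope.
Local Open Scope classical_set_scope.

(* Bit positions: (file index, bit index within the file). *)
Definition bitpos (N F : nat) := ('I_N * 'I_F)%type.
Definition library (N F : nat) := {ffun bitpos N F -> bool}.
Definition file (N F : nat) (W : library N F) (n : 'I_N) : {ffun 'I_F -> bool} :=
  [ffun j => W (n, j)].

(* Uncoded prefetching: user k stores the bits indexed by Mp k. *)
Definition prefetching (N F K : nat) := {ffun 'I_K -> {set bitpos N F}}.
Definition mem_ok (R : realType) (N F K : nat) (M : R) (Mp : prefetching N F K) :=
  forall k, (#|Mp k|%:R : R) <= M * F%:R.
(* Content of user k's cache: the stored bits (others masked to false). *)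
Definition cache (N F K : nat) (Mp : prefetching N F K) (k : 'I_K) (W : library N F)
  : library N F := [ffun b => (b \in Mp k) && W b].

Definition demand (N K : nat) := {ffun 'I_K -> 'I_N}.

(* Error probability of user k under i.i.d. Bernoulli(1/2) bits,
   i.e. under the uniform distribution on all libraries. *)
Definition err_prob (R : realType) (N F K L : nat) (d : demand N K)
  (Mp : prefetching N F K)
  (enc : library N F -> {ffun 'I_L -> bool})
  (dec : 'I_K -> {ffun 'I_L -> bool} -> library N F -> {ffun 'I_F -> bool})
  (k : 'I_K) : R :=
  (#|[set W : library N F | dec k (enc W) (cache Mp k W) != file W (d k)]|%:R)
  / (#|{: library N F}|%:R).

Definition achievable (R : realType) (N F K : nat) (eps : R) (d : demand N K)
  (Mp : prefetching N F K) (L : nat) : Prop :=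
  exists (enc : library N F -> {ffun 'I_L -> bool})
         (dec : 'I_K -> {ffun 'I_L -> bool} -> library N F -> {ffun 'I_F -> bool}),
    forall k, err_prob R d Mp enc dec k <= eps.

Definition Rstar (R : realType) (N F K : nat) (eps : R) (d : demand N K)
  (Mp : prefetching N F K) : R :=
  inf [set r : R | exists L, achievable eps d Mp L /\ r = L%:R / F%:R].

Definition stats (N K : nat) (d : demand N K) : seq nat :=
  sort geq [seq #|[set k | d k == n]| | n <- enum 'I_N].

Definition dtype (N K : nat) (s : seq nat) : {set demand N K} :=
  [set d | stats d == s].

Definition Ne (s : seq nat) : nat := count (fun x => 0 < x)%N s.

Definition Rstar_s (R : realType) (N F K : nat) (eps : R) (s : seq nat)
  (Mp : prefetching N F K) : R :=
  (#|dtype N K s|%:R)^-1 * \sum_(d in dtype N K s) Rstar eps d Mp.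

Definition Rstar_min (R : realType) (N F K : nat) (M eps : R) (s : seq nat) : R :=
  inf [set r : R | exists Mp : prefetching N F K, mem_ok M Mp /\ r = Rstar_s eps s Mp].

(* Lower convex envelope of the points {(t, f t) : t = 0..K}, evaluated at x:
   the lowest ordinate of the convex hull of these points above abscissa x. *)
Definition lconv (R : realType) (K : nat) (f : nat -> R) (x : R) : R :=
  inf [set y : R | exists lam : 'I_K.+1 -> R,
         (forall i, 0 <= lam i) /\ \sum_i lam i = 1 /\
         \sum_i lam i * (i : nat)%:R = x /\ y = \sum_i lam i * f i].

Definition lb_fun (R : realType) (K ne : nat) (t : nat) : R :=
  (('C(K, t.+1)%:R - 'C(K - ne, t.+1)%:R) / 'C(K, t)%:R).

(* Main.v *)
Require Import Defs.
From mathcomp Require Import all_boot all_order all_algebra all_fingroup.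
From mathcomp Require Import boolp classical_sets reals.
From mathcomp Require Import zify ring lra.
Import Order.TTheory GRing.Theory Num.Theory.
Local Open Scope ring_scope.

Set Implicit Arguments. Unset Strict Implicit. Unset Printing Implicit Defensive.


Section Dec.
Variables (N F K : nat) (Mp : prefetching N F K) (d : demand N K) (ne : nat)
  (u : 'I_ne -> 'I_K).

Definition Sb (b : bitpos N F) : {set 'I_K} := [set k | b \in Mp k].
Definition Uj (j : 'I_ne) : {set 'I_K} := [set u i | i : 'I_ne & (i <= j)%N].
Definition Aset : {set bitpos N F} :=
  [set b | [exists j : 'I_ne, (b.1 == d (u j)) && [disjoint Sb b & Uj j]]].

Variables (L : nat) (enc : library N F -> {ffun 'I_L -> bool})
  (dec : 'I_K -> {ffun 'I_L -> bool} -> library N F -> {ffun 'I_F -> bool}).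

Definition Gset : {set library N F} :=
  [set W | [forall j : 'I_ne, dec (u j) (enc W) (cache Mp (u j) W) == file W (d (u j))]].

Definition mask (W : library N F) : library N F := [ffun b => (b \notin Aset) && W b].

Lemma G_inj : {in Gset &, injective (fun W => (enc W, mask W))}.
Proof.
move=> W W'; rewrite !inE => /forallP GW /forallP GW' [eenc emask].
have eb b : b \notin Aset -> W b = W' b.
  move=> nb; have := congr1 (fun f : library N F => f b) emask; by rewrite !ffunE nb.
have key : forall j : 'I_ne, file W (d (u j)) = file W' (d (u j)).
  move=> j; have := ltn_ord j; move: j.
  suff : forall m (j : 'I_ne), (j < m)%N -> file W (d (u j)) = file W' (d (u j)).
    by move=> H j _; apply: (H j.+1).
  elim=> [|m IH] j //; rewrite ltnS => jm.
  have ec : cache Mp (u j) W = cache Mp (u j) W'.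
    apply/ffunP=> b; rewrite !ffunE.
    case bM: (b \in Mp (u j)) => //=.
    case bA: (b \in Aset); last by apply: eb; rewrite bA.
    move: bA; rewrite inE => /existsP [i /andP [/eqP b1 dis]].
    have ij : (i < j)%N.
      rewrite ltnNge; apply/negP => ji.
      move: dis => /disjoint_setI0 /setP /(_ (u j)).
      rewrite !inE bM /=.
      have -> : u j \in Uj i by apply/imsetP; exists j; rewrite // inE.
      by [].
    have := IH i (leq_trans ij jm).
    move/(congr1 (fun f : {ffun 'I_F -> bool} => f b.2)); rewrite !ffunE -b1.
    by case: b {b1 dis bM} => [? ?].
  have := eqP (GW j); have := eqP (GW' j); rewrite eenc ec => -> ->.
  done.
apply/ffunP=> b.
case bA: (b \in Aset); last by apply: eb; rewrite bA.
move: bA; rewrite inE => /existsP [i /andP [/eqP b1 _]].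
have := key i; move/(congr1 (fun f : {ffun 'I_F -> bool} => f b.2)); rewrite !ffunE -b1.
by case: b {b1}.
Qed.

Lemma card_G_le : (#|Gset| <= 2 ^ L * 2 ^ (N * F - #|Aset|))%N.
Proof.
rewrite -(card_in_imset G_inj).
have -> : (N * F - #|Aset| = #|~: Aset|)%N.
  have := cardsC Aset; rewrite card_prod !card_ord => <-; by rewrite addKn.
have -> : (2 ^ #|~: Aset| = #|pffun_on false (~: Aset) (predT : {pred bool})|)%N.
  by rewrite card_pffun_on; congr (_ ^ _)%N; rewrite -(card_bool); apply: eq_card.
have -> : (2 ^ L = #|[set: {ffun 'I_L -> bool}]|)%N by rewrite cardsT card_ffun card_bool card_ord.
have -> : #|pffun_on false (~: Aset) (predT : {pred bool})| =
          #|[set V : library N F | V \in pffun_on false (~: Aset) (predT : {pred bool})]|.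
  by apply: eq_card => V; rewrite !inE.
rewrite -cardsX; apply: subset_leq_card; apply/fintype.subsetP => x /imsetP [W _ ->].
rewrite !inE /=; apply/pffun_onP; split => //.
apply/supportP => b; rewrite inE negbK => bA; by rewrite ffunE bA.
Qed.

End Dec.


Lemma card_cset (T : finType) (P : T -> bool) :
  #|mem (classical_sets.mkset (fun x => is_true (P x)))| = #|[set x | P x]|.
Proof. apply: eq_card => x. rewrite [RHS]finset.inE. apply/idP/idP.
  by rewrite inE.  by move=> Px; rewrite inE. Qed.

Lemma card_lib N F : #|{: library N F}| = (2 ^ (N * F))%N.
Proof. by rewrite card_ffun card_bool card_prod !card_ord. Qed.

Lemma rate_pow (R : realType) N F K (Mp : prefetching N F K) (d : demand N K) ne
  (u : 'I_ne -> 'I_K) L (enc : library N F -> {ffun 'I_L -> bool})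
  (dec : 'I_K -> {ffun 'I_L -> bool} -> library N F -> {ffun 'I_F -> bool}) (eps : R) :
  (forall k, err_prob R d Mp enc dec k <= eps) ->
  (1 - ne%:R * eps) * 2%:R ^+ #|Aset Mp d u| <= 2%:R ^+ L.
Proof.
move=> He.
set G := Gset Mp d u enc dec.
set A := #|Aset Mp d u|.
have AN : (A <= N * F)%N.
  by rewrite /A; apply: leq_trans (max_card _) _; rewrite card_prod !card_ord.
have lib0 : (0 : R) < #|{: library N F}|%:R by rewrite ltr0n card_lib expn_gt0.
have Fb : forall j : 'I_ne,
  (#|[set W : library N F | dec (u j) (enc W) (cache Mp (u j) W) != file W (d (u j))]|%:R : R)
   <= eps * #|{: library N F}|%:R.
  move=> j; have := He (u j); rewrite /err_prob ler_pdivrMr // card_cset; apply.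
have CG : (#|~: G| <= \sum_(j < ne)
   #|[set W : library N F | dec (u j) (enc W) (cache Mp (u j) W) != file W (d (u j))]|)%N.
  set Fs := fun j : 'I_ne => [set W : library N F | dec (u j) (enc W) (cache Mp (u j) W) != file W (d (u j))].
  have cs : forall S : {set library N F}, #|S| = (\sum_W (W \in S : nat))%N.
    by move=> S; rewrite -sum1_card big_mkcond /=; apply: eq_bigr => W _; case: (W \in S).
  rewrite cs (eq_bigr (fun j => \sum_W (W \in Fs j : nat))%N); last by move=> *; rewrite cs.
  rewrite exchange_big /=; apply: leq_sum => W _.
  case WG: (W \in ~: G) => //.
  move: WG; rewrite inE /G /Gset inE negb_forall => /existsP [j0 Hj].
  rewrite (bigD1 j0) //= /Fs inE Hj; exact: leq_addr.
have cG : (#|{: library N F}|%:R : R) * (1 - ne%:R * eps) <= #|G|%:R.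
  have e1 := cardsC G; have : (#|~: G|%:R : R) <= ne%:R * (eps * #|{: library N F}|%:R).
    move: CG; rewrite -(ler_nat R) => CG; apply: (le_trans CG).
    rewrite natr_sum; apply: le_trans (ler_sum _ (fun j _ => Fb j)) _.
    by rewrite sumr_const card_ord mulr_natl.
  move/eqP: e1; rewrite -(eqr_nat R) natrD => /eqP e1.
  rewrite -e1. lra.
have cG2 : (#|G|%:R : R) <= 2%:R ^+ L * 2%:R ^+ (N * F - A).
  by rewrite -!natrX -natrM ler_nat card_G_le.
have e2 : (#|{: library N F}|%:R : R) = 2%:R ^+ (N * F - A) * 2%:R ^+ A.
  by rewrite card_lib -exprD subnK // natrX.
have p : (0 : R) < 2%:R ^+ (N * F - A) by apply: exprn_gt0.
rewrite -(ler_pM2l p).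
have := le_trans cG cG2; rewrite e2.
have -> : 2%:R ^+ (N * F - A) * 2%:R ^+ A * (1 - ne%:R * eps) =
  2%:R ^+ (N * F - A) * ((1 - ne%:R * eps) * 2%:R ^+ A) by ring.
by rewrite [2%:R ^+ L * _]mulrC.
Qed.


Lemma num_key (R : realType) (dl : R) (A L : nat) :
  dl <= 1 -> dl * 2%:R ^+ A <= 2%:R ^+ L -> dl * A%:R - 1 <= L%:R.
Proof.
move=> dl1 H.
have [AL|LA] := leqP A L.
  have : dl * A%:R <= A%:R by rewrite -[X in _ <= X]mul1r ler_wpM2r.
  have : (A%:R : R) <= L%:R by rewrite ler_nat.
  lra.
have [dl0|dl0] := lerP dl 0.
  have : dl * A%:R <= 0 by apply: mulr_le0_ge0.
  have : (0:R) <= L%:R by [].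
  lra.
set m := (A - L)%N.
have eA : A = (L + m)%N by rewrite /m; lia.
have Hn : (A <= (L.+1) * 2 ^ m)%N.
  have := ltn_expl m (isT : (1 < 2)%N). rewrite -/m => hm. nia.
have H2 : dl * 2%:R ^+ m <= 1.
  rewrite eA exprD mulrA in H.
  have p : (0:R) < 2%:R ^+ L by apply: exprn_gt0.
  by rewrite -(ler_pM2r p) mul1r mulrC mulrA [_ * dl]mulrC.
have : (A%:R : R) <= L.+1%:R * 2%:R ^+ m by rewrite -natrX -natrM ler_nat.
have p : (0:R) < 2%:R ^+ m by apply: exprn_gt0.
move=> HA.
have : dl * A%:R <= dl * (L.+1%:R * 2%:R ^+ m) by rewrite ler_wpM2l // ltW.
have : dl * (L.+1%:R * 2%:R ^+ m) = L.+1%:R * (dl * 2%:R ^+ m) by ring.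
have : L.+1%:R * (dl * 2%:R ^+ m) <= (L.+1%:R : R) * 1 by rewrite ler_wpM2l.
rewrite -addn1 natrD. lra.
Qed.

Lemma card_file_bits N F (n : 'I_N) : #|[set b : bitpos N F | b.1 == n]| = F.
Proof.
have -> : [set b : bitpos N F | b.1 == n] = finset.setX [set n]%SET [set: 'I_F]%SET.
  by apply/setP => -[x y]; rewrite !inE andbT.
by rewrite cardsX cards1 cardsT card_ord mul1n.
Qed.

Lemma Aset_le N F K (Mp : prefetching N F K) (d : demand N K) ne (u : 'I_ne -> 'I_K) :
  (#|Aset Mp d u| <= ne * F)%N.
Proof.
rewrite -sum1_card.
apply: (@leq_trans (\sum_(j < ne) #|[set b : bitpos N F | b.1 == d (u j)]|)); last first.
  by rewrite (eq_bigr (fun _ => F)) ?sum_nat_const ?card_ord // => j _; rewrite card_file_bits.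
rewrite (eq_bigr (fun j => \sum_b (b \in [set b : bitpos N F | b.1 == d (u j)] : nat))%N);
  last by move=> j _; rewrite -sum1_card big_mkcond /=; apply: eq_bigr => b _; case: (_ \in _).
rewrite exchange_big /= big_mkcond /=; apply: leq_sum => b _.
case bA: (b \in Aset Mp d u) => //.
move: bA; rewrite inE => /existsP [j /andP [bj _]].
by rewrite (bigD1 j) //= inE bj.
Qed.

Lemma achievable_full (R : realType) N F K (eps : R) (d : demand N K) (Mp : prefetching N F K) :
  0 <= eps -> achievable eps d Mp #|{: bitpos N F}|.
Proof.
move=> e0.
exists (fun W : library N F => [ffun i : 'I_#|{: bitpos N F}| => W (enum_val i)]).
exists (fun k x _ => [ffun j => x (enum_rank (d k, j))]).
move=> k; rewrite /err_prob card_cset.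
rewrite (_ : #|_| = 0%N) ?mul0r //.
apply/eqP; rewrite cards_eq0; apply/eqP/setP => W; rewrite !finset.inE; apply/negbTE; rewrite negbK; apply/eqP/ffunP => j.
by rewrite !ffunE enum_rankK.
Qed.

Lemma Rstar_lb (R : realType) N F K (eps : R) (d : demand N K) (Mp : prefetching N F K)
  ne (u : 'I_ne -> 'I_K) : (0 < F)%N -> 0 < eps ->
  #|Aset Mp d u|%:R / F%:R - (F%:R^-1 + ne%:R ^+ 2 * eps) <= Rstar eps d Mp.
Proof.
move=> F0 e0.
apply: lb_le_inf.
  by exists (#|{: bitpos N F}|%:R / F%:R); exists #|{: bitpos N F}|; split => //; apply: achievable_full; apply: ltW.
move=> r [L [[enc [dec He]] ->]].
have H1 := num_key (dl := 1 - ne%:R * eps) (A := #|Aset Mp d u|) (L := L).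
have := H1 _ (rate_pow u He).
have le1 : 1 - ne%:R * eps <= 1.
  have : 0 <= ne%:R * eps by apply: mulr_ge0 => //; apply: ltW.
  lra.
move=> /(_ le1) H2.
have AF := Aset_le Mp d u; move: AF; rewrite -(ler_nat R) natrM => AF.
have Fp : (0 : R) < F%:R by rewrite ltr0n.
rewrite -(ler_pM2r Fp) mulrBl mulrDl !mulfVK ?gt_eqF // mulVf ?gt_eqF //.
set a := (#|Aset Mp d u|%:R : R) in H2 AF *.
have : ne%:R * eps * a <= ne%:R * eps * (ne%:R * F%:R).
  by apply: ler_wpM2l => //; apply: mulr_ge0 => //; apply: ltW.
rewrite expr2.
lra.
Qed.




Lemma statsE N K (d : demand N K) : stats d = sort geq [seq #|[set k | d k == n]| | n <- enum 'I_N].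
Proof. by rewrite /stats; congr sort; apply: eq_map => n; rewrite card_cset. Qed.

Lemma sort_geq_perm (s1 s2 : seq nat) : perm_eq s1 s2 -> sort geq s1 = sort geq s2.
Proof.
move=> H; apply/perm_sortP => //.
- move=> x y /=; apply: leq_total.
- move=> x y z /= h1 h2; lia.
- move=> x y /= /andP [h1 h2]; lia.
Qed.

Lemma stats_compU N K (d : demand N K) (f g : 'I_K -> 'I_K) :
  cancel f g -> cancel g f -> stats [ffun k => d (f k)] = stats d.
Proof.
move=> fg gf; rewrite !statsE; congr (sort _ _); apply: eq_map => n.
have -> : [set k | [ffun k => d (f k)] k == n] = f @^-1: [set k | d k == n].
  by apply/finset.setP => k; rewrite !finset.inE ffunE.
by rewrite card_preimset //; apply: can_inj fg.
Qed.

Lemma stats_perm N K (d1 d2 : demand N K) (f g : 'I_N -> 'I_N) :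
  cancel f g -> cancel g f ->
  (forall n, #|[set k | d1 k == n]| = #|[set k | d2 k == g n]|) -> stats d1 = stats d2.
Proof.
move=> fg gf E; rewrite !statsE.
rewrite (eq_map E) (map_comp (fun n => #|[set k | d2 k == n]|) g).
apply: sort_geq_perm; apply: perm_map; apply: uniq_perm.
- by rewrite map_inj_uniq ?enum_uniq //; apply: can_inj gf.
- exact: enum_uniq.
- move=> x; rewrite mem_enum; apply/mapP; exists (f x); by rewrite ?mem_enum ?fg.
Qed.

Lemma stats_compF N K (d : demand N K) (f g : 'I_N -> 'I_N) :
  cancel f g -> cancel g f -> stats [ffun k => f (d k)] = stats d.
Proof.
move=> fg gf; apply: (stats_perm fg gf) => n; apply: eq_card => k.
by rewrite !finset.inE ffunE -{1}(gf n) (can_eq fg).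
Qed.

Definition img N K (d : demand N K) : {set 'I_N} := [set d k | k in 'I_K].

Lemma Ne_stats N K (d : demand N K) : Ne (stats d) = #|img d|.
Proof.
rewrite /Ne statsE.
have := perm_sort geq [seq #|[set k | d k == n]| | n <- enum 'I_N].
move/seq.permPl/seq.permP => ->; rewrite count_map.
rewrite cardE /enum_mem size_filter -enumT.
rewrite (@eq_filter _ _ predT) // filter_predT; apply: eq_count => n /=.
rewrite card_gt0; apply/set0Pn/imsetP => [[k]|[k _ ->]].
  by rewrite finset.inE => /eqP <-; exists k.
by exists k; rewrite finset.inE.
Qed.


Section Sym.
Variables (R : realType) (N K : nat) (s : seq nat) (ne : nat).

Definition V (d : demand N K) : {set {ffun 'I_ne -> 'I_K}} :=
  [set u : {ffun 'I_ne -> 'I_K} | injectiveb (fun i => d (u i))].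
Definition wt (d : demand N K) : R := (#|V d|%:R)^-1.
Definition Phi (n : 'I_N) (S : {set 'I_K}) : R :=
  \sum_(d in dtype N K s) wt d * \sum_(u in V d) \sum_(j < ne)
     ((n == d (u j)) && [disjoint S & Uj u j])%:R.
Definition Psi (S : {set 'I_K}) : R :=
  \sum_(d in dtype N K s) wt d * \sum_(u in V d) \sum_(j < ne)
     ([disjoint S & Uj u j])%:R.

Lemma Phi_swap n n' S : Phi n S = Phi n' S.
Proof.
pose tau := tperm n n'.
pose h := fun d : demand N K => [ffun k => tau (d k)].
have hinj : injective h.
  move=> d1 d2 /ffunP E; apply/ffunP => k; have := E k; rewrite !ffunE; apply: perm_inj.
rewrite /Phi (reindex_inj hinj) /=.
apply: eq_big => [d | d dD].
  by rewrite !finset.inE /h (@stats_compF _ _ d tau tau) //; apply: tpermK.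
have VE : V (h d) = V d.
  apply/finset.setP => u; rewrite !finset.inE; apply/injectiveP/injectiveP => Hi i j E.
    by apply: Hi; rewrite /h !ffunE E.
  by apply: Hi; move: E; rewrite /h !ffunE; apply: perm_inj.
have key x : (n == tau x) = (n' == x).
  by rewrite -(inj_eq (@perm_inj _ tau)) tpermK tpermL.
rewrite /wt VE; congr (_ * _); apply: eq_bigr => u _; apply: eq_bigr => j _.
by rewrite /h ffunE key.
Qed.

Lemma sum_Phi S : \sum_(n < N) Phi n S = Psi S.
Proof.
rewrite /Phi /Psi exchange_big /=; apply: eq_bigr => d _.
rewrite -mulr_sumr; congr (_ * _).
rewrite exchange_big /=; apply: eq_bigr => u _.
rewrite exchange_big /=; apply: eq_bigr => j _.
rewrite (bigD1 (d (u j))) //= eqxx /= big1 ?addr0 // => n /negbTE ->.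
by [].
Qed.

Lemma Phi_Psi n S : (0 < N)%N -> Phi n S = Psi S / N%:R.
Proof.
move=> N0; rewrite -sum_Phi (eq_bigr (fun _ => Phi n S)) ?sumr_const ?card_ord.
  by rewrite -[Phi n S *+ N]mulr_natr mulfK // pnatr_eq0 -lt0n.
by move=> n' _; apply: Phi_swap.
Qed.

Lemma disj_bij (f g : 'I_K -> 'I_K) (S U : {set 'I_K}) : cancel f g -> cancel g f ->
  [disjoint S & g @: U] = [disjoint f @: S & U].
Proof.
move=> fg gf.
have fgU : f @: (g @: U) = U.
  rewrite -imset_comp; apply/finset.setP => x; apply/imsetP/idP => [[y yU ->]|xU].
    by rewrite /= gf.
  by exists x => //=; rewrite gf.
by rewrite -(@imset_disjoint _ _ f S (g @: U) (can_inj fg)) fgU.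
Qed.

Lemma Psi_bij (f g : 'I_K -> 'I_K) S : cancel f g -> cancel g f -> Psi S = Psi (f @: S).
Proof.
move=> fg gf.
pose h := fun d : demand N K => [ffun k => d (f k)].
have hinj : injective h.
  move=> d1 d2 /ffunP E; apply/ffunP => k; have := E (g k); rewrite !ffunE gf //.
pose kk := fun u : {ffun 'I_ne -> 'I_K} => [ffun i => g (u i)].
have kinj : injective kk.
  move=> u1 u2 /ffunP E; apply/ffunP => i; have := E i; rewrite !ffunE; exact: (can_inj gf).
have Vk d u : (kk u \in V (h d)) = (u \in V d).
  rewrite !finset.inE; apply/injectiveP/injectiveP => Hi i j E.
    by apply: Hi; rewrite /h /kk !ffunE !gf E.
  by apply: Hi; move: E; rewrite /h /kk !ffunE !gf.
have cV d : #|V (h d)| = #|V d|.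
  rewrite -(card_preimset _ kinj); apply: eq_card => u; by rewrite [in LHS]finset.inE Vk.
have Uk u j : Uj (kk u) j = g @: Uj u j.
  rewrite /Uj -imset_comp; apply: eq_imset => i; by rewrite /kk ffunE.
rewrite /Psi (reindex_inj hinj) /=.
apply: eq_big => [d | d dD].
  by rewrite !finset.inE /h (@stats_compU _ _ d f g).
rewrite /wt cV; congr (_ * _).
rewrite (reindex_inj kinj) /=; apply: eq_big => [u|u _]; first by rewrite Vk.
apply: eq_bigr => j _; by rewrite Uk (disj_bij _ _ fg gf).
Qed.

End Sym.


Lemma bij_exists K (S S' : {set 'I_K}) : #|S| = #|S'| ->
  exists f g : 'I_K -> 'I_K, [/\ cancel f g, cancel g f & f @: S = S'].
Proof.
move=> cS.
have mk : forall X : {set 'I_K}, [/\ uniq (enum X ++ enum (~: X)),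
     size (enum X ++ enum (~: X)) = K & forall x, x \in enum X ++ enum (~: X)].
  move=> X; split.
  - rewrite cat_uniq !enum_uniq andbT /=; apply/hasPn => x; rewrite !mem_enum finset.inE.
    by move=> xn; rewrite xn.
  - by rewrite size_cat -!cardE cardsC card_ord.
  - by move=> x; rewrite mem_cat !mem_enum finset.inE orbN.
have [ua sa ma] := mk S; have [ub sb mb] := mk S'.
set a := enum S ++ enum (~: S) in ua sa ma *.
set b := enum S' ++ enum (~: S') in ub sb mb *.
have eab : size b = size a by rewrite sa sb.
exists (fun x => nth x b (index x a)), (fun y => nth y a (index y b)); split.
- move=> x /=; rewrite index_uniq ?nth_index //.
  by rewrite eab index_mem.
- move=> y /=; rewrite index_uniq ?nth_index //.
  by rewrite -eab index_mem.
- have sub : (fun x => nth x b (index x a)) @: S \subset S'.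
    apply/fintype.subsetP => y /imsetP [x xS ->].
    have ix : (index x a < #|S|)%N.
      by rewrite /a index_cat mem_enum xS cardE index_mem mem_enum.
    rewrite /b nth_cat -cardE -cS ix.
    by rewrite -mem_enum mem_nth // -cardE -cS.
  apply/eqP; rewrite eqEcard sub /= card_in_imset ?cS //.
  move=> x y _ _ /= E.
  have := congr1 (fun z => nth z a (index z b)) E.
  by rewrite /= !index_uniq ?nth_index // eab index_mem.
Qed.

Lemma card_le_ord n (j : 'I_n) : #|[set i : 'I_n | (i <= j)%N]| = j.+1.
Proof.
have jl : (j.+1 <= n)%N := ltn_ord j.
have -> : [set i : 'I_n | (i <= j)%N] = [set widen_ord jl i | i in 'I_j.+1].
  apply/finset.setP => i; rewrite finset.inE; apply/idP/imsetP => [ij|[k _ ->]].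
    by exists (Ordinal (ij : (i < j.+1)%N)) => //; apply: val_inj.
  by rewrite /= -ltnS.
rewrite card_imset ?card_ord //.
by move=> x y /(congr1 val) /= /val_inj.
Qed.

Lemma card_Uj K ne (u : 'I_ne -> 'I_K) j : injective u -> #|Uj u j| = j.+1.
Proof. by move=> ui; rewrite /Uj card_imset // card_le_ord. Qed.

Lemma sum_cnt (T : finType) (P Q : pred T) (R : realType) :
  \sum_(x | P x) ((Q x)%:R : R) = #|[set x | Q x & P x]|%:R.
Proof.
rewrite -sum1_card natr_sum big_mkcond [RHS]big_mkcond /=; apply: eq_bigr => x _.
by rewrite finset.inE; case: (P x); case: (Q x).
Qed.

Lemma Psi_val (R : realType) N K s ne (S : {set 'I_K}) :
  (forall d, d \in dtype N K s -> (0 < #|V ne d|)%N) ->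
  'C(K, #|S|)%:R * Psi R N s ne S =
  #|dtype N K s|%:R * (\sum_(j < ne) 'C(K - j.+1, #|S|))%:R.
Proof.
move=> Vp.
set t := #|S|.
have E1 : \sum_(S' : {set 'I_K} | #|S'| == t) Psi R N s ne S' = 'C(K, t)%:R * Psi R N s ne S.
  rewrite (eq_bigr (fun _ => Psi R N s ne S)).
    have cd := card_draws 'I_K t; rewrite card_ord in cd.
    rewrite sumr_const -cd mulr_natl.
    by congr (_ *+ _); apply: eq_card => X; rewrite finset.inE.
  move=> S' /eqP cS; have [f [g [fg gf fS]]] := bij_exists (esym cS).
  by rewrite [RHS](Psi_bij _ _ _ _ S fg gf) fS.
rewrite -E1 /Psi exchange_big /= mulr_natl -(sumr_const (mem (dtype N K s))).
apply: eq_bigr => d dD.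
rewrite -mulr_sumr.
suff -> : \sum_(S' : {set 'I_K} | #|S'| == t) \sum_(u in V ne d) \sum_(j < ne)
    ([disjoint S' & Uj u j])%:R = #|V ne d|%:R * ((\sum_(j < ne) 'C(K - j.+1, t))%:R : R).
  by rewrite /wt mulrA mulVf ?mul1r // pnatr_eq0 -lt0n Vp.
rewrite mulr_natl -sumr_const exchange_big /=; apply: eq_bigr => u uV.
rewrite natr_sum exchange_big /=; apply: eq_bigr => j _.
have ui : injective u.
  move: uV; rewrite finset.inE => /injectiveP Hi x y E; apply: Hi; by rewrite /= E.
rewrite (sum_cnt (fun S' : {set 'I_K} => #|S'| == t) (fun S' => [disjoint S' & Uj u j])).
congr (_%:R).
have -> : [set S' : {set 'I_K} | [disjoint S' & Uj u j] & #|S'| == t] =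
          [set S' : {set 'I_K} | S' \subset ~: Uj u j & #|S'| == t].
  by apply/finset.setP => X; rewrite !finset.inE finset.disjoints_subset.
rewrite cards_draws; congr 'C(_, _).
by have := cardsC (Uj u j); rewrite card_Uj // => e; rewrite -[in RHS](card_ord K) -e addKn.
Qed.


Lemma lb_fun_ge0 (R : realType) K ne t : 0 <= lb_fun R K ne t.
Proof.
rewrite /lb_fun; apply: divr_ge0 => //; rewrite subr_ge0 ler_nat.
by apply: leq_bin2l; apply: leq_subr.
Qed.

Lemma lb_fun_K (R : realType) K ne : lb_fun R K ne K = 0.
Proof.
rewrite /lb_fun (@bin_small K) ?ltnSn // (@bin_small (K - ne)) ?subrr ?mul0r //.
by rewrite ltnS leq_subr.
Qed.

Lemma hockey K ne t : (ne <= K)%N ->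
  (\sum_(j < ne) 'C(K - j.+1, t) + 'C(K - ne, t.+1) = 'C(K, t.+1))%N.
Proof.
elim: ne => [|n IH] nK; first by rewrite big_ord0 subn0.
rewrite big_ord_recr /= -addnA [('C(_, t) + _)%N]addnC -binS.
have -> : ((K - n.+1).+1 = K - n)%N by lia.
exact: IH (ltnW nK).
Qed.

Lemma lb_fun_sum (R : realType) K ne t : (ne <= K)%N -> (t <= K)%N ->
  lb_fun R K ne t = (\sum_(j < ne) 'C(K - j.+1, t))%:R / 'C(K, t)%:R.
Proof.
move=> nK tK; rewrite /lb_fun -(hockey t nK) natrD addrK //.
Qed.

Lemma sum_by_card (R : realType) (T : finType) K (c : T -> nat) (h : nat -> R) :
  (forall x, c x <= K)%N ->
  \sum_(i < K.+1) #|[set x | c x == i]|%:R * h i = \sum_x h (c x).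
Proof.
move=> cK.
rewrite (eq_bigr (fun i : 'I_K.+1 => \sum_x ((c x == i)%:R * h i))); last first.
  move=> i _; rewrite -sum1_card natr_sum mulr_suml big_mkcond /=.
  by apply: eq_bigr => x _; rewrite finset.inE; case: (c x == i); rewrite ?mul1r ?mul0r.
rewrite exchange_big /=; apply: eq_bigr => x _.
have ci : (c x < K.+1)%N by rewrite ltnS.
rewrite (bigD1 (Ordinal ci)) //= eqxx mul1r big1 ?addr0 // => i ni.
have -> : (c x == i) = false.
  by apply/negbTE; apply: contra ni => /eqP e; apply/eqP; apply: val_inj.
by rewrite mul0r.
Qed.

Lemma sum_Sb N F K (Mp : prefetching N F K) :
  (\sum_(b : bitpos N F) #|Sb Mp b| = \sum_(k < K) #|Mp k|)%N.
Proof.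
rewrite (eq_bigr (fun b => \sum_(k < K) (b \in Mp k : nat))%N); last first.
  move=> b _; rewrite -sum1_card big_mkcond /=; apply: eq_bigr => k _.
  by rewrite finset.inE; case: (b \in Mp k).
rewrite exchange_big /=; apply: eq_bigr => k _.
rewrite -sum1_card [RHS]big_mkcond /=; apply: eq_bigr => b _; by case: (b \in Mp k).
Qed.

Lemma lconv_le (R : realType) N F K (Mp : prefetching N F K) (M : R) ne :
  (0 < N)%N -> (0 < F)%N -> 0 <= M -> M <= N%:R -> mem_ok M Mp ->
  lconv K (lb_fun R K ne) (K%:R * M / N%:R) <=
  (N * F)%:R^-1 * \sum_(b : bitpos N F) lb_fun R K ne #|Sb Mp b|.
Proof.
move=> N0 F0 M0 MN mok.
set f := lb_fun R K ne.
set c := fun i : nat => #|[set b : bitpos N F | #|Sb Mp b| == i]|.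
have cK : forall b : bitpos N F, (#|Sb Mp b| <= K)%N.
  by move=> b; apply: leq_trans (max_card _) _; rewrite card_ord.
have NFp : (0 : R) < (N * F)%:R by rewrite ltr0n muln_gt0 N0 F0.
set NF := ((N * F)%:R : R) in NFp *.
set m := NF^-1 * \sum_(b : bitpos N F) (#|Sb Mp b|%:R : R).
set x := K%:R * M / N%:R.
have Np : (0 : R) < N%:R by rewrite ltr0n.
have m0 : 0 <= m by apply: mulr_ge0; [rewrite invr_ge0 ltW | apply: sumr_ge0].
have mx : m <= x.
  rewrite /m -natr_sum sum_Sb natr_sum.
  have : \sum_(k < K) (#|Mp k|%:R : R) <= K%:R * (M * F%:R).
    apply: le_trans (ler_sum _ (fun k _ => mok k)) _.
    by rewrite sumr_const card_ord mulr_natl.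
  move=> H; rewrite ler_pdivrMl // /x /NF natrM.
  have Fp : (0 : R) < F%:R by rewrite ltr0n.
  have -> : N%:R * F%:R * (K%:R * M / N%:R) = K%:R * (M * F%:R).
    by field; rewrite gt_eqF.
  exact: H.
have xK : x <= K%:R.
  rewrite /x ler_pdivrMr // ler_wpM2l //.
have S1 : \sum_(i < K.+1) (c i)%:R * (1 : R) = NF.
  rewrite (sum_by_card (fun _ => 1) cK) sumr_const /NF card_prod !card_ord.
  by rewrite -mulr_natl mulr1 natrM.
have Sm : \sum_(i < K.+1) (c i)%:R * (i%:R : R) = NF * m.
  rewrite (sum_by_card (fun i => (i%:R : R)) cK) /m mulrA mulfV ?mul1r //.
  by rewrite gt_eqF.
have Sf : \sum_(i < K.+1) (c i)%:R * f i = \sum_(b : bitpos N F) f #|Sb Mp b|.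
  by rewrite (sum_by_card f cK).
set th := (x - m) / (K%:R - m).
have [th0 th1 theq] : [/\ 0 <= th, th <= 1 & (1 - th) * m + th * K%:R = x].
  have [mK|mK] := ltrP m K%:R.
    have p : 0 < K%:R - m by rewrite subr_gt0.
    split.
    - by apply: divr_ge0; rewrite ?subr_ge0 // ltW.
    - by rewrite ler_pdivrMr // mul1r lerD2r.
    - rewrite /th; field; by rewrite gt_eqF.
  have mK' : m = K%:R by apply/eqP; rewrite eq_le mK andbT; apply: le_trans mx xK.
  have -> : th = 0 by rewrite /th mK' subrr invr0 mulr0.
  split => //; rewrite subr0 mul1r mul0r addr0; apply/eqP; rewrite eq_le mx /=.
  by rewrite mK'.
pose lam := fun i : 'I_K.+1 => (1 - th) * ((c i)%:R / NF) + th * (i == ord_max)%:R.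
have lamS : forall g : nat -> R, \sum_i lam i * g i =
    (1 - th) * NF^-1 * \sum_(i < K.+1) (c i)%:R * g i + th * g K.
  move=> g; rewrite /lam (eq_bigr (fun i : 'I_K.+1 => (1 - th) * NF^-1 * ((c i)%:R * g i) +
      th * ((i == ord_max)%:R * g i))); last first.
    by move=> i _; rewrite mulrDl; congr (_ + _); rewrite -!mulrA; congr (_ * _);
       rewrite mulrC -mulrA; congr (_ * _); rewrite mulrC.
  rewrite big_split /= -!mulr_sumr; congr (_ + _); congr (_ * _).
  rewrite (bigD1 ord_max) //= eqxx mul1r big1 ?addr0 // => i ni.
  by rewrite (negbTE ni) mul0r.
have lb : has_lbound [set y : R | exists lam : 'I_K.+1 -> R,
         (forall i, 0 <= lam i) /\ \sum_i lam i = 1 /\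
         \sum_i lam i * (i : nat)%:R = x /\ y = \sum_i lam i * f i].
  exists 0 => y [l [l0 [_ [_ ->]]]]; apply: sumr_ge0 => i _; apply: mulr_ge0 => //.
  exact: lb_fun_ge0.
have := ge_inf lb; move=> /(_ (\sum_i lam i * f i)) H.
rewrite /lconv -/x; apply: le_trans (H _) _.
  exists lam; split.
    move=> i; apply: addr_ge0; apply: mulr_ge0 => //; rewrite ?subr_ge0 //.
    by apply: divr_ge0 => //; apply: ltW.
  split.
    have := lamS (fun _ => 1); rewrite (eq_bigr (fun i => lam i)) => [->|i _]; last by rewrite mulr1.
    by rewrite S1 mulfVK ?gt_eqF // mulr1; lra.
  split => //.
  have := lamS (fun i => i%:R); move=> ->; rewrite Sm mulrA mulfVK ?gt_eqF //.
rewrite lamS Sf /f lb_fun_K mulr0 addr0 -mulrA.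
have X0 : 0 <= NF^-1 * \sum_(b : bitpos N F) lb_fun R K ne #|Sb Mp b|.
  by apply: mulr_ge0; [rewrite invr_ge0 ltW | apply: sumr_ge0 => b _; apply: lb_fun_ge0].
rewrite /NF in X0 *.
set XX := _ * _ in X0 *.
have : 0 <= th * XX by apply: mulr_ge0.
have : (1 - th) * XX = XX - th * XX by ring.
lra.
Qed.


Lemma Aset_sum N F K (Mp : prefetching N F K) (d : demand N K) ne (u : 'I_ne -> 'I_K) :
  injective (fun i => d (u i)) ->
  #|Aset Mp d u| = (\sum_(b : bitpos N F) \sum_(j < ne)
      ((b.1 == d (u j)) && [disjoint Sb Mp b & Uj u j]))%N.
Proof.
move=> inj.
rewrite -sum1_card big_mkcond /=; apply: eq_bigr => b _.
rewrite finset.inE.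
case: existsP => [[j0 /andP [b1 dj]]|nex].
  rewrite (bigD1 j0) /= ?b1 ?dj //= big1 ?addn0 // => j nj.
  case/boolP: (_ && _) => // /andP [/eqP bj _]; move/eqP: b1 => b1.
  by move: nj; rewrite (inj j j0) ?eqxx //= -bj -b1.
rewrite big1 // => j _; case/boolP: (_ && _) => // Pj; exfalso; apply: nex; by exists j.
Qed.

Lemma V_nonempty N K (d : demand N K) ne : ne = #|img d| -> (0 < #|V ne d|)%N.
Proof.
move=> ->.
have : forall i : 'I_#|img d|, exists k, d k = enum_val i.
  move=> i; have := enum_valP i; move=> /imsetP [k _ ->]; by exists k.
move=> /fin_all_exists [g Hg].
apply/card_gt0P; exists [ffun i => g i]; rewrite finset.inE.
apply/injectiveP => i j; rewrite /= !ffunE !Hg; apply: enum_val_inj.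
Qed.


Theorem lemma2 (R : realType) (N K F : nat) (M eps : R) (s : seq nat) :
  (0 < N)%N -> (0 < K)%N -> (0 < F)%N ->
  0 <= M -> M <= N%:R -> 0 < eps ->
  (exists d : demand N K, stats d = s) ->
  @Rstar_min R N F K M eps s >=
    @lconv R K (lb_fun R K (Ne s)) (K%:R * M / N%:R)
    - (F%:R^-1 + (Ne s)%:R ^+ 2 * eps).
Proof.
move=> N0 K0 F0 M0 MN e0 [d0 sd0].
set ne := Ne s.
set c := F%:R^-1 + ne%:R ^+ 2 * eps.
have neimg : forall d, d \in dtype N K s -> ne = #|img d|.
  by move=> d; rewrite finset.inE => /eqP sd; rewrite /ne -sd Ne_stats.
have d0D : d0 \in dtype N K s by rewrite finset.inE sd0.
have neK : (ne <= K)%N.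
  by rewrite (neimg _ d0D); apply: leq_trans (leq_imset_card _ _) _; rewrite card_ord.
have Vp : forall d, d \in dtype N K s -> (0 < #|V ne d|)%N.
  by move=> d dD; apply: V_nonempty; apply: neimg.
have Dp : (0 < #|dtype N K s|)%N by apply/card_gt0P; exists d0.
have Np : (0 : R) < N%:R by rewrite ltr0n.
have Fp : (0 : R) < F%:R by rewrite ltr0n.
have Dpr : (0 : R) < #|dtype N K s|%:R by rewrite ltr0n.
have PhiV : forall (n : 'I_N) (S : {set 'I_K}), Phi R s ne n S = #|dtype N K s|%:R / N%:R * lb_fun R K ne #|S|.
  move=> n S; rewrite (Phi_Psi R s ne n S N0).
  have tK : (#|S| <= K)%N by apply: leq_trans (max_card _) _; rewrite card_ord.
  have Cp : (0 : R) < 'C(K, #|S|)%:R by rewrite ltr0n bin_gt0.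
  have H := Psi_val R S Vp.
  have -> : Psi R N s ne S = #|dtype N K s|%:R * (\sum_(j < ne) 'C(K - j.+1, #|S|))%:R / 'C(K, #|S|)%:R.
    by rewrite -H; field; rewrite gt_eqF.
  rewrite lb_fun_sum //; field.
  by rewrite !gt_eqF.
apply: lb_le_inf.
  pose Mp0 : prefetching N F K := [ffun _ : 'I_K => (finset.set0 : {set bitpos N F})].
  exists (Rstar_s eps s Mp0).
  exists Mp0; split; last by [].
  rewrite /mem_ok => k; rewrite /Mp0 ffunE cards0; exact: mulr_ge0.
move=> r [Mp [mok ->]].
have L1 := lconv_le ne N0 F0 M0 MN mok.
set X := (N * F)%:R^-1 * \sum_(b : bitpos N F) lb_fun R K ne #|Sb Mp b| in L1.
suff H : X - c <= Rstar_s eps s Mp by rewrite -/c; lra.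
have per_d : forall d, d \in dtype N K s ->
    wt R ne d * (\sum_(u in V ne d) (#|Aset Mp d u|%:R : R)) / F%:R - c <= Rstar eps d Mp.
  move=> d dD.
  have Vd := Vp d dD.
  have Vr : (0 : R) < #|V ne d|%:R by rewrite ltr0n.
  have : \sum_(u in V ne d) (#|Aset Mp d u|%:R / F%:R - c) <= \sum_(u in V ne d) Rstar eps d Mp.
    apply: ler_sum => u _; exact: Rstar_lb.
  rewrite sumrB -mulr_suml !sumr_const -(mulr_natr c) -(mulr_natr (Rstar eps d Mp)).
  set SA := \sum_(u in V ne d) _.
  move=> H.
  have w0 : 0 <= wt R ne d by rewrite /wt invr_ge0 ltW.
  have := ler_wpM2l w0 H.
  have -> : wt R ne d * (Rstar eps d Mp * #|V ne d|%:R) = Rstar eps d Mp.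
    by rewrite /wt mulrC -mulrA mulfV ?mulr1 // gt_eqF.
  have -> : wt R ne d * (SA / F%:R - c * #|V ne d|%:R) = wt R ne d * SA / F%:R - c.
    rewrite /wt; field; by rewrite !gt_eqF.
  done.
have sumA : \sum_(d in dtype N K s) wt R ne d * \sum_(u in V ne d) (#|Aset Mp d u|%:R : R) =
    \sum_(b : bitpos N F) Phi R s ne b.1 (Sb Mp b).
  rewrite /Phi exchange_big /=; apply: eq_bigr => d dD.
  rewrite -mulr_sumr; congr (_ * _).
  rewrite exchange_big /=; apply: eq_bigr => u uV.
  have ui : injective (fun i => d (u i)) by move: uV; rewrite finset.inE => /injectiveP.
  rewrite Aset_sum // natr_sum; apply: eq_bigr => b _; by rewrite natr_sum.
have sumB : \sum_(d in dtype N K s) wt R ne d * (\sum_(u in V ne d) (#|Aset Mp d u|%:R : R)) / F%:R =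
    #|dtype N K s|%:R * X.
  rewrite -mulr_suml sumA.
  rewrite (eq_bigr (fun b : bitpos N F => #|dtype N K s|%:R / N%:R * lb_fun R K ne #|Sb Mp b|));
    last by move=> b _; apply: PhiV.
  rewrite -mulr_sumr /X natrM.
  set Sf := \sum_(b : bitpos N F) _.
  set DD := (#|dtype N K s|%:R : R).
  by rewrite invfM; ring.
rewrite /Rstar_s.
have : \sum_(d in dtype N K s) (wt R ne d * (\sum_(u in V ne d) (#|Aset Mp d u|%:R : R)) / F%:R - c)
   <= \sum_(d in dtype N K s) Rstar eps d Mp.
  by apply: ler_sum => d dD; apply: per_d.
rewrite sumrB sumB sumr_const -(mulr_natr c).
set SR := \sum_(d in dtype N K s) _.
move=> H.
have Di : 0 <= (#|dtype N K s|%:R : R)^-1 by rewrite invr_ge0 ltW.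
have := ler_wpM2l Di H.
have -> : (#|dtype N K s|%:R)^-1 * (#|dtype N K s|%:R * X - c * #|dtype N K s|%:R) = X - c.
  field; by rewrite gt_eqF.
done.
Qed.
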